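(* Let $(\varepsilon^-_n)$, $(\varepsilon^+_n)$ be sequences with $\varepsilon^-_n\le\varepsilon^+_n$, $n^{1/3}\varepsilon^-_n\to\infty$ and $\varepsilon^+_n\to0$; let $\varepsilon_n\in[\varepsilon^-_n,\varepsilon^+_n]$, $\gamma\in[-1,1]$ and $p_n=\frac1n(1+\gamma\varepsilon_n)$. Define the process $(S_k)_{k\ge0}$ by $S_0=0$ and $S_k=S_{k-1}+X_k-1$ for $k\ge1$, where conditionally on $X_1,\dots,X_{k-1}$, $X_k$ has the Binomial$(n-k-S_{k-1},p_n)$ distribution. Then for every $\eta>0$ there is $\kappa>0$, depending only on $\eta$ and $(\varepsilon^\pm_n)$, such that \[ \mathbb{P}\left(\sup_{0\le k\le 3n\varepsilon_n}\frac{1}{n\varepsilon_n^2}\left|S_k-k\left(\gamma\varepsilon_n-\frac{k}{2n}\right)\right|>\eta\right)\le\exp(-\kappa n\varepsilon_n^3), \] the supremum being over integers $k$. *)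

(* Defs.v *)
From HB Require Import structures.
From mathcomp Require Import all_boot all_order all_algebra.
From mathcomp Require Import all_classical all_reals all_analysis.
Set Implicit Arguments. Unset Strict Implicit. Unset Printing Implicit Defensive.
Import Order.TTheory GRing.Theory Num.Theory.
Local Open Scope ring_scope.

Definition binom_pmf (R : realType) (N : nat) (p : R) (x : nat) : R :=
  ('C(N, x))%:R * p ^+ x * (1 - p) ^+ (N - x).

(* A realisation of (X_1, ..., X_K) is x : {ffun 'I_K -> 'I_n.+1}
   (x i is X_{i+1}; note X_k <= n - k - S_{k-1} <= n always).
   S_k = X_1 + ... + X_k - k, for 0 <= k <= K. *)
Definition Spath (n K : nat) (x : {ffun 'I_K -> 'I_n.+1}) (k : nat) : int :=
  (\sum_(i < K | (i < k)%N) ((x i : nat)%:Z)) - k%:Z.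

(* The number n - k - S_{k-1} is always >= 0
   on the support (S_{k-1} <= n - k), so taking its absolute value is harmless. *)
Definition path_prob (R : realType) (n K : nat) (p : R)
    (x : {ffun 'I_K -> 'I_n.+1}) : R :=
  \prod_(i < K) binom_pmf (absz (n%:Z - (i.+1)%:Z - Spath x i)%R) p (x i).

Definition dev_event (R : realType) (n K : nat) (gamma eps eta : R)
    (x : {ffun 'I_K -> 'I_n.+1}) : bool :=
  [exists k : 'I_K.+1,
     (n%:R * eps ^+ 2)^-1 *
       `| (Spath x k)%:~R - (k : nat)%:R * (gamma * eps - (k : nat)%:R / (2 * n%:R)) |
     > eta].

Definition nsteps (R : realType) (n : nat) (eps : R) : nat :=
  Num.truncn (3 * n%:R * eps).

Definition dev_prob (R : realType) (n : nat) (gamma eps eta : R) : R :=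
  let K := nsteps n eps in
  let p := (1 + gamma * eps) / n%:R in
  \sum_(x : {ffun 'I_K -> 'I_n.+1} | dev_event gamma eps eta x) path_prob p x.

(* Main.v *)
Require Import Defs.
From HB Require Import structures.
From mathcomp Require Import all_boot all_order all_algebra.
From mathcomp Require Import all_classical all_reals all_analysis.
From mathcomp Require Import ring lra.
Import Order.TTheory GRing.Theory Num.Theory.
Set Implicit Arguments. Unset Strict Implicit. Unset Printing Implicit Defensive.
Local Open Scope ring_scope.
Definition ext (n m : nat) (x : {ffun 'I_m -> 'I_n.+1}) (l : nat) : nat :=
  oapp (fun i : 'I_m => (x i : nat)) 0%N (insub l).

Lemma ext_ord n m (x : {ffun 'I_m -> 'I_n.+1}) (i : 'I_m) : ext x i = x i.
Proof. by rewrite /ext valK. Qed.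

Definition Sz (f : nat -> nat) (k : nat) : int := \sum_(l < k) (f l)%:Z - k%:Z.

Lemma Spath_ext n K (x : {ffun 'I_K -> 'I_n.+1}) k : (k <= K)%N ->
  Spath x k = Sz (ext x) k.
Proof.
move=> kK; rewrite /Spath /Sz (big_ord_widen_cond _ (fun _ => true) (fun l => (ext x l)%:Z) kK) /=.
by congr (_ - _); apply: eq_bigr => i _; rewrite ext_ord.
Qed.

Lemma Sz_causal f g k : (forall l, (l < k)%N -> f l = g l) -> Sz f k = Sz g k.
Proof. by move=> h; rewrite /Sz; congr (_ - _); apply: eq_bigr => i _; rewrite h. Qed.

Definition zN (n : nat) (f : nat -> nat) (j : nat) : int := n%:Z - (j.+1)%:Z - Sz f j.

Definition qk (R : realType) (n : nat) (p : R) (j : nat) (f : nat -> nat) (v : nat) : R :=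
  binom_pmf (absz (zN n f j)) p v.

Definition Pm (R : realType) (n : nat) (p : R) (m : nat) (y : {ffun 'I_m -> 'I_n.+1}) : R :=
  \prod_(i < m) qk n p i (ext y) (y i).

Lemma path_probE (R : realType) n K (p : R) (x : {ffun 'I_K -> 'I_n.+1}) :
  path_prob p x = Pm p x.
Proof.
rewrite /path_prob /Pm; apply: eq_bigr => i _.
by rewrite /qk /zN Spath_ext // ltnW.
Qed.

Definition extend (n m : nat) (y : {ffun 'I_m -> 'I_n.+1}) (v : 'I_n.+1) :
  {ffun 'I_m.+1 -> 'I_n.+1} :=
  [ffun i : 'I_m.+1 => oapp (fun j : 'I_m => y j) v (insub (val i))].

Definition restr (n m : nat) (x : {ffun 'I_m.+1 -> 'I_n.+1}) :
  {ffun 'I_m -> 'I_n.+1} * 'I_n.+1 :=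
  ([ffun i : 'I_m => x (widen_ord (leqnSn m) i)], x ord_max).

Lemma ext_extend_lt n m y v l : (l < m)%N -> @ext n m.+1 (extend y v) l = ext y l.
Proof.
move=> lm; have lm1 : (l < m.+1)%N by apply: ltnW.
rewrite /ext (insubT (fun k => k < m.+1)%N lm1) (insubT (fun k => k < m)%N lm) /=.
by rewrite ffunE /= (insubT (fun k => k < m)%N lm).
Qed.

Lemma ext_extend_m n m y v : @ext n m.+1 (extend y v) m = v.
Proof.
rewrite /ext (insubT (fun k => k < m.+1)%N (ltnSn m)) /= ffunE /= insubF //.
by rewrite ltnn.
Qed.

Lemma split_sum (R : realType) n m (F : {ffun 'I_m.+1 -> 'I_n.+1} -> R) :
  \sum_x F x = \sum_(y : {ffun 'I_m -> 'I_n.+1}) \sum_(v : 'I_n.+1) F (extend y v).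
Proof.
rewrite pair_big /=.
rewrite (reindex (fun yv : {ffun 'I_m -> 'I_n.+1} * 'I_n.+1 => extend yv.1 yv.2)) //=.
apply: onW_bij; exists (@restr n m).
- move=> [y v] /=; rewrite /restr; congr (_, _).
    apply/ffunP => i; rewrite !ffunE /= valK //.
  by rewrite ffunE /= insubF // ltnn.
- move=> x; apply/ffunP => i; rewrite ffunE /restr /=.
  case: (ltnP i m) => him.
    rewrite (insubT (fun k => k < m)%N him) /= ffunE; congr (x _); exact: val_inj.
  rewrite insubF /=; last by rewrite ltnNge him.
  congr (x _); apply: val_inj => /=; apply/eqP; rewrite eqn_leq him -ltnS ltn_ord.
  done.
Qed.
Lemma sum_trunc (R : realType) (g : nat -> R) (m N : nat) :
  (forall v, 0 <= g v) -> (forall v, (N < v)%N -> g v = 0) ->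
  \sum_(v < m) g v <= \sum_(v < N.+1) g v.
Proof.
move=> g0 gN.
have -> : \sum_(v < m) g v = \sum_(0 <= v < m) g v by rewrite big_mkord.
have -> : \sum_(v < N.+1) g v = \sum_(0 <= v < N.+1) g v by rewrite big_mkord.
case: (leqP m N.+1) => hm.
  rewrite (@big_cat_nat _ _ _ m 0 N.+1 _ _ (leq0n m) hm) /= lerDl; apply: sumr_ge0 => i _; exact: g0.
rewrite (@big_cat_nat _ _ _ N.+1 0 m _ _ (leq0n _) (ltnW hm)) /= gerDl big_nat_cond big1 //.
by move=> i /andP[/andP[hi _] _]; apply: gN.
Qed.

Lemma binom_pmf_ge0 (R : realType) N (p : R) v : 0 <= p <= 1 -> 0 <= binom_pmf N p v.
Proof.
case/andP=> p0 p1; rewrite /binom_pmf; apply: mulr_ge0; first apply: mulr_ge0 => //.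
- exact: exprn_ge0.
- by apply: exprn_ge0; rewrite subr_ge0.
Qed.

Lemma binom_pmf_out (R : realType) N (p : R) v : (N < v)%N -> binom_pmf N p v = 0.
Proof. by move=> h; rewrite /binom_pmf bin_small // mul0r mul0r. Qed.

Lemma binom_mgf (R : realType) N (p c : R) :
  \sum_(v < N.+1) binom_pmf N p v * c ^+ v = (1 - p + p * c) ^+ N.
Proof.
rewrite exprDn; apply: eq_bigr => i _.
by rewrite /binom_pmf exprMn -mulr_natr; ring.
Qed.

Lemma binom_sum_le1 (R : realType) N (p : R) m : 0 <= p <= 1 ->
  \sum_(v < m) binom_pmf N p v <= 1.
Proof.
move=> hp; apply: le_trans (sum_trunc m (N:=N) _ _) _.
- by move=> v; apply: binom_pmf_ge0.
- by move=> v; apply: binom_pmf_out.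
have := binom_mgf N p 1; rewrite mulr1 subrK expr1n => <-.
by rewrite le_eqVlt; apply/orP; left; apply/eqP; apply: eq_bigr => i _; rewrite expr1n mulr1.
Qed.
Lemma expR_le_quad (R : realType) (t : R) : t <= 2^-1 -> expR t <= 1 + t + 2 * t ^+ 2.
Proof.
move=> ht.
have h1 : 0 < 1 - t by lra.
have h2 : 1 - t <= expR (- t) by have := expR_ge1Dx (- t); lra.
have h3 : expR t * (1 - t) <= (1 + t + 2 * t ^+ 2) * (1 - t).
  apply: le_trans (_ : expR t * expR (- t) <= _).
    by apply: ler_wpM2l => //; apply: expR_ge0.
  rewrite expRxMexpNx_1.
  have : 0 <= t ^+ 2 * (1 - 2 * t) by apply: mulr_ge0; [apply: sqr_ge0|lra].
  rewrite expr2; nra.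
by rewrite ler_pM2r in h3.
Qed.

Lemma mgf_bound (R : realType) (N : nat) (p t : R) :
  0 <= p <= 1 -> N%:R * p <= 2 -> t <= 2^-1 ->
  (1 - p + p * expR t) ^+ N * expR (- (t * N%:R * p) - 4 * t ^+ 2) <= 1.
Proof.
move=> /andP[p0 p1] hN ht.
have hb : 1 - p + p * expR t <= expR (p * (t + 2 * t ^+ 2)).
  apply: le_trans (expR_ge1Dx _).
  have := expR_le_quad ht => he.
  have : p * expR t <= p * (1 + t + 2 * t ^+ 2) by apply: ler_wpM2l.
  lra.
have hb0 : 0 <= 1 - p + p * expR t.
  have := expR_ge0 t => e0; have : 0 <= p * expR t by apply: mulr_ge0.
  lra.
apply: le_trans (_ : expR (p * (t + 2 * t ^+ 2)) ^+ N * expR (- (t * N%:R * p) - 4 * t ^+ 2) <= _).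
  apply: ler_wpM2r; first exact: expR_ge0.
  by apply: lerXn2r; rewrite ?nnegrE ?expR_ge0.
rewrite -expRM_natl -expRD -[X in _ <= X]expR0 ler_expR.
have hN0 : 0 <= N%:R * p by apply: mulr_ge0.
have ht2 : 0 <= t ^+ 2 by apply: sqr_ge0.
have : (N%:R * p) * t ^+ 2 <= 2 * t ^+ 2 by apply: ler_wpM2r.
have -> : N%:R * (p * (t + 2 * t ^+ 2)) + (- (t * N%:R * p) - 4 * t ^+ 2) =
  2 * ((N%:R * p) * t ^+ 2) - 4 * t ^+ 2 by ring.
lra.
Qed.

Definition SR (R : realType) (f : nat -> nat) (k : nat) : R := (Sz f k)%:~R.
Definition Nr (R : realType) (n : nat) (f : nat -> nat) (j : nat) : R := (zN n f j)%:~R.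

Lemma Sz_S f k : Sz f k.+1 = Sz f k + (f k)%:Z - 1.
Proof. by rewrite /Sz big_ord_recr /= -addn1 PoszD; ring. Qed.

Lemma SR_S (R : realType) f k : SR R f k.+1 = SR R f k + (f k)%:R - 1.
Proof. by rewrite /SR Sz_S intrB intrD. Qed.
Lemma Nr_E (R : realType) n f j : Nr R n f j = n%:R - (j.+1)%:R - SR R f j.
Proof. by rewrite /Nr /zN /SR !intrB. Qed.

Definition Mk (R : realType) (n : nat) (p : R) (f : nat -> nat) (k : nat) : R :=
  \sum_(l < k) ((f l)%:R - Nr R n f l * p).

Definition Ak (R : realType) (n : nat) (p th : R) (f : nat -> nat) (k : nat) : R :=
  th * Mk n p f k - 4 * th ^+ 2 * k%:R.

Definition stopped (R : realType) (n : nat) (p th L : R) (j : nat) (f : nat -> nat) : bool :=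
  [exists l : 'I_j.+1, L <= Ak n p th f l].

Fixpoint Y (R : realType) (n : nat) (p th L : R) (f : nat -> nat) (j : nat) : R :=
  match j with
  | 0 => 1
  | j'.+1 => if stopped n p th L j' f then Y n p th L f j'
             else Y n p th L f j' * (if (f j')%:R <= Nr R n f j' then 1 else 0)
                  * expR (Ak n p th f j'.+1 - Ak n p th f j')
  end.

Definition agree (f g : nat -> nat) (k : nat) := forall l, (l < k)%N -> f l = g l.

Lemma agree_le f g k k' : (k' <= k)%N -> agree f g k -> agree f g k'.
Proof. by move=> h a l hl; apply: a; apply: leq_trans h. Qed.

Lemma SR_causal (R : realType) f g k : agree f g k -> SR R f k = SR R g k.
Proof. by move=> a; rewrite /SR (Sz_causal a). Qed.

Lemma Nr_causal (R : realType) n f g k : agree f g k -> Nr R n f k = Nr R n g k.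
Proof. by move=> a; rewrite !Nr_E (SR_causal R a). Qed.

Lemma Mk_causal (R : realType) n (p : R) f g k : agree f g k -> Mk n p f k = Mk n p g k.
Proof.
move=> a; rewrite /Mk; apply: eq_bigr => l _.
rewrite (a l (ltn_ord l)) (Nr_causal R n (agree_le _ a)) //; exact: ltnW.
Qed.

Lemma Ak_causal (R : realType) n (p th : R) f g k : agree f g k -> Ak n p th f k = Ak n p th g k.
Proof. by move=> a; rewrite /Ak (Mk_causal n p a). Qed.

Lemma stopped_causal (R : realType) n (p th L : R) f g j :
  agree f g j -> stopped n p th L j f = stopped n p th L j g.
Proof.
move=> a; rewrite /stopped; apply: eq_existsb => l.
by rewrite (Ak_causal n p th (agree_le _ a)) // -ltnS ltn_ord.
Qed.

Lemma Y_causal (R : realType) n (p th L : R) f g j :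
  agree f g j -> Y n p th L f j = Y n p th L g j.
Proof.
elim: j => [//|j IH] a /=.
have a' : agree f g j by apply: agree_le a.
rewrite (stopped_causal n p th L a') (IH a') (Ak_causal n p th a) (Ak_causal n p th a').
by rewrite (a j (ltnSn j)) (Nr_causal R n a').
Qed.

Lemma Mk_S (R : realType) n (p : R) f k :
  Mk n p f k.+1 = Mk n p f k + ((f k)%:R - Nr R n f k * p).
Proof. by rewrite /Mk big_ord_recr. Qed.

Lemma Ak_S (R : realType) n (p th : R) f k :
  Ak n p th f k.+1 - Ak n p th f k = th * ((f k)%:R - Nr R n f k * p) - 4 * th ^+ 2.
Proof. rewrite /Ak Mk_S -addn1 natrD; ring. Qed.

Lemma Y_ge0 (R : realType) n (p th L : R) f j : 0 <= Y n p th L f j.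
Proof.
elim: j => [|j IH] /=; first exact: ler01.
case: ifP => _ //; apply: mulr_ge0; last exact: expR_ge0.
by apply: mulr_ge0 => //; case: ifP.
Qed.

Definition upd (f : nat -> nat) (m v : nat) : nat -> nat :=
  fun l => if l == m then v else f l.

Lemma agree_upd f m v : agree (upd f m v) f m.
Proof. by move=> l hl; rewrite /upd ifN // ltn_eqF. Qed.

Lemma SR_ge (R : realType) f k : - (k%:R) <= SR R f k.
Proof.
have h : (- k%:Z <= Sz f k)%R.
  by rewrite /Sz addrC lerDl; apply: sumr_ge0.
by rewrite -(ler_int R) intrN in h.
Qed.

Lemma Nr_le (R : realType) n f j : Nr R n f j <= n%:R - 1.
Proof.
rewrite Nr_E; have := SR_ge R f j; rewrite -addn1 natrD; lra.
Qed.
Lemma Y_S (R : realType) n (p th L : R) f j :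
  Y n p th L f j.+1 = if stopped n p th L j f then Y n p th L f j
             else Y n p th L f j * (if (f j)%:R <= Nr R n f j then 1 else 0)
                  * expR (Ak n p th f j.+1 - Ak n p th f j).
Proof. by []. Qed.

Lemma inner_bound (R : realType) n (p th : R) f m :
  0 <= p <= 1 -> p * n%:R <= 2 -> th <= 2^-1 ->
  \sum_(v < n.+1) qk n p m f v * (if v%:R <= Nr R n f m then 1 else 0)
     * expR (th * (v%:R - Nr R n f m * p) - 4 * th ^+ 2) <= 1.
Proof.
move=> hp hpn ht.
have [hneg|hpos] := ltP (Nr R n f m) 0.
  rewrite big1 ?ler01 // => v _.
  by rewrite ifF ?mulr0 ?mul0r //; apply/negbTE; rewrite -ltNge; apply: lt_le_trans hneg _.
have hz : (0 <= zN n f m)%R by rewrite -(ler0z R).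
set N := absz (zN n f m).
have hNr : Nr R n f m = N%:R by rewrite /Nr -(gez0_abs hz).
rewrite hNr.
set g := fun v : nat => binom_pmf N p v * (if v%:R <= N%:R :> R then 1 else 0)
     * expR (th * (v%:R - N%:R * p) - 4 * th ^+ 2).
have -> : \sum_(v < n.+1) qk n p m f v * (if v%:R <= N%:R :> R then 1 else 0)
     * expR (th * (v%:R - N%:R * p) - 4 * th ^+ 2) = \sum_(v < n.+1) g v by [].
apply: le_trans (sum_trunc (n.+1) (N:=N) _ _) _.
- move=> v; rewrite /g; apply: mulr_ge0; last exact: expR_ge0.
  apply: mulr_ge0; first exact: binom_pmf_ge0.
  by case: ifP.
- by move=> v hv; rewrite /g binom_pmf_out // !mul0r.
have -> : \sum_(v < N.+1) g v =
   (\sum_(v < N.+1) binom_pmf N p v * expR th ^+ v) * expR (- (th * N%:R * p) - 4 * th ^+ 2).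
  rewrite mulr_suml; apply: eq_bigr => v _; rewrite /g ifT; last by rewrite ler_nat -ltnS.
  rewrite mulr1 -mulrA; congr (_ * _).
  rewrite -expRM_natl -expRD; congr expR; ring.
rewrite binom_mgf; apply: mgf_bound => //.
have := Nr_le R n f m; rewrite hNr => hN.
case/andP: hp => p0 _.
have : N%:R * p <= (n%:R - 1) * p by apply: ler_wpM2r.
lra.
Qed.

Lemma kernel_step (R : realType) n (p th L : R) f m :
  0 <= p <= 1 -> p * n%:R <= 2 -> th <= 2^-1 ->
  \sum_(v : 'I_n.+1) qk n p m f v * Y n p th L (upd f m v) m.+1 <= Y n p th L f m.
Proof.
move=> hp hpn ht.
have hY : forall v, Y n p th L (upd f m v) m = Y n p th L f m.
  by move=> v; apply: Y_causal; apply: agree_upd.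
have hS : forall v, stopped n p th L m (upd f m v) = stopped n p th L m f.
  by move=> v; apply: stopped_causal; apply: agree_upd.
have hN : forall v, Nr R n (upd f m v) m = Nr R n f m.
  by move=> v; apply: Nr_causal; apply: agree_upd.
have hu : forall v, upd f m v m = v by move=> v; rewrite /upd eqxx.
case hst : (stopped n p th L m f).
  under eq_bigr => v _ do rewrite Y_S hS hst hY.
  rewrite -mulr_suml; apply: ler_piMl; first exact: Y_ge0.
  exact: binom_sum_le1.
under eq_bigr => v _ do rewrite Y_S hS hst hY Ak_S hN hu.
have -> : \sum_(v < n.+1) qk n p m f v *
      (Y n p th L f m * (if v%:R <= Nr R n f m then 1 else 0) *
       expR (th * (v%:R - Nr R n f m * p) - 4 * th ^+ 2)) =
  Y n p th L f m * \sum_(v < n.+1) qk n p m f v * (if v%:R <= Nr R n f m then 1 else 0)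
     * expR (th * (v%:R - Nr R n f m * p) - 4 * th ^+ 2).
  by rewrite mulr_sumr; apply: eq_bigr => v _; ring.
apply: ler_piMr; first exact: Y_ge0.
exact: inner_bound.
Qed.
Lemma qk_causal (R : realType) n (p : R) j f g v : agree f g j -> qk n p j f v = qk n p j g v.
Proof. by move=> a; rewrite /qk /zN (Sz_causal a). Qed.

Lemma agree_extend n m y v : agree (@ext n m.+1 (extend y v)) (ext y) m.
Proof. by move=> l hl; rewrite ext_extend_lt. Qed.

Lemma extend_widen n m (y : {ffun 'I_m -> 'I_n.+1}) v (i : 'I_m) :
  extend y v (widen_ord (leqnSn m) i) = y i.
Proof. by rewrite ffunE /= valK. Qed.

Lemma extend_max n m (y : {ffun 'I_m -> 'I_n.+1}) v : extend y v ord_max = v.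
Proof. by rewrite ffunE /= insubF // ltnn. Qed.

Lemma Pm_extend (R : realType) n (p : R) m (y : {ffun 'I_m -> 'I_n.+1}) v :
  Pm p (extend y v) = Pm p y * qk n p m (ext y) v.
Proof.
rewrite /Pm big_ord_recr /=; congr (_ * _).
  apply: eq_bigr => i _; rewrite extend_widen; apply: qk_causal.
  apply: agree_le (agree_extend y v); exact: ltnW.
rewrite extend_max; apply: qk_causal; exact: agree_extend.
Qed.

Lemma Pm_ge0 (R : realType) n (p : R) m (y : {ffun 'I_m -> 'I_n.+1}) :
  0 <= p <= 1 -> 0 <= Pm p y.
Proof. by move=> hp; apply: prodr_ge0 => i _; apply: binom_pmf_ge0. Qed.

Definition EY (R : realType) n (p th L : R) m : R :=
  \sum_(y : {ffun 'I_m -> 'I_n.+1}) Pm p y * Y n p th L (ext y) m.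

Lemma EY_step (R : realType) n (p th L : R) m :
  0 <= p <= 1 -> p * n%:R <= 2 -> th <= 2^-1 ->
  EY n p th L m.+1 <= EY n p th L m.
Proof.
move=> hp hpn ht; rewrite /EY split_sum; apply: ler_sum => y _.
have -> : \sum_(v : 'I_n.+1) Pm p (extend y v) * Y n p th L (ext (extend y v)) m.+1 =
    Pm p y * \sum_(v : 'I_n.+1) qk n p m (ext y) v * Y n p th L (upd (ext y) m v) m.+1.
  rewrite mulr_sumr; apply: eq_bigr => v _; rewrite Pm_extend -mulrA; congr (_ * (_ * _)).
  apply: Y_causal => l hl; rewrite /upd; case: eqP => [->|ne].
    exact: ext_extend_m.
  by apply: ext_extend_lt; rewrite ltn_neqAle -ltnS hl andbT; apply/eqP.
apply: ler_wpM2l; first exact: Pm_ge0.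
exact: kernel_step.
Qed.

Lemma EY0 (R : realType) n (p th L : R) : EY n p th L 0 = 1.
Proof.
rewrite /EY (eq_bigr (fun _ => 1)); last by move=> y _; rewrite /Pm big_ord0 mul1r.
by rewrite sumr_const card_ffun !card_ord expn0.
Qed.

Lemma EY_le1 (R : realType) n (p th L : R) m :
  0 <= p <= 1 -> p * n%:R <= 2 -> th <= 2^-1 -> EY n p th L m <= 1.
Proof.
move=> hp hpn ht; elim: m => [|m IH]; first by rewrite EY0.
by apply: le_trans IH; apply: EY_step.
Qed.
Definition valid (R : realType) n (f : nat -> nat) (j : nat) :=
  forall l, (l < j)%N -> (f l)%:R <= Nr R n f l.

Lemma Nr_S (R : realType) n f j : Nr R n f j.+1 = Nr R n f j - (f j)%:R.
Proof. rewrite !Nr_E SR_S -[j.+2]addn1 natrD; ring. Qed.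

Lemma Nr_ge0 (R : realType) n f j : (0 < n)%N -> valid R n f j -> 0 <= Nr R n f j.
Proof.
move=> n0; case: j => [|j] hv.
  rewrite Nr_E /SR /Sz big_ord0 sub0r subr0 subr_ge0 ler1n; exact: n0.
rewrite Nr_S subr_ge0; exact: hv.
Qed.

Lemma Nr_absz (R : realType) n f j : 0 <= Nr R n f j -> Nr R n f j = (absz (zN n f j))%:R.
Proof.
move=> h; have hz : (0 <= zN n f j)%R by rewrite -(ler0z R).
by rewrite /Nr -{1}(gez0_abs hz).
Qed.

Lemma Ak0 (R : realType) n (p th : R) f : Ak n p th f 0 = 0.
Proof. by rewrite /Ak /Mk big_ord0 mulr0 mulr0 subr0. Qed.

Lemma Y_inv (R : realType) n (p th L : R) f j : valid R n f j ->
  (~~ [exists l : 'I_j, L <= Ak n p th f l] -> Y n p th L f j = expR (Ak n p th f j)) /\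
  (stopped n p th L j f -> expR L <= Y n p th L f j).
Proof.
elim: j => [|j IH] hv.
  split; first by rewrite /= Ak0 expR0.
  case/existsP => l; rewrite (ord1 l) /= Ak0 => hL.
  by rewrite -expR0 ler_expR.
have hv' : valid R n f j by move=> l hl; apply: hv; apply: ltnW.
have [IH1 IH2] := IH hv'.
have hfj : (f j)%:R <= Nr R n f j by apply: hv.
split.
  move=> hn; rewrite Y_S.
  have hs : stopped n p th L j f = false by apply/negbTE; exact: hn.
  rewrite hs hfj mulr1 IH1; first by rewrite -expRD; congr expR; ring.
  apply: contraFN hs => /existsP [l hl]; apply/existsP.
  by exists (widen_ord (leqnSn _) l).
move=> hst; rewrite Y_S; case hs : (stopped n p th L j f); first exact: IH2.
rewrite hfj mulr1 IH1; last first.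
  apply: contraFN hs => /existsP [l hl]; apply/existsP.
  by exists (widen_ord (leqnSn _) l).
rewrite -expRD subrKC ler_expR.
case/existsP: hst => l hl.
case: (ltnP l j.+1) => hlj.
  move: hs => /negbT /existsP; case; by exists (Ordinal hlj).
have -> : (j.+1) = l by apply/eqP; rewrite eqn_leq hlj -ltnS ltn_ord.
exact: hl.
Qed.
Lemma valid_of_Pm (R : realType) n K (p : R) (x : {ffun 'I_K -> 'I_n.+1}) :
  (0 < n)%N -> Pm p x != 0 -> valid R n (ext x) K.
Proof.
move=> n0 hP.
have hq : forall i : 'I_K, qk n p i (ext x) (x i) != 0.
  move=> i; apply: contraNneq hP => h; by rewrite /Pm (bigD1 i) //= h mul0r.
suff : forall j, (j <= K)%N -> valid R n (ext x) j by apply.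
elim=> [|j IH] hj; first by [].
have hv := IH (ltnW hj).
move=> l; rewrite ltnS leq_eqVlt => /orP [/eqP ->|hl]; last exact: hv.
have h0 := Nr_ge0 n0 hv.
rewrite (Nr_absz h0).
have -> : ext x j = x (Ordinal hj) by rewrite -(ext_ord x (Ordinal hj)).
have := hq (Ordinal hj); rewrite /qk /= ler_nat.
move=> h; rewrite leqNgt; apply: contra h => hlt; apply/eqP; exact: binom_pmf_out.
Qed.

Lemma doob (R : realType) n K (p th L : R) :
  (0 < n)%N -> 0 <= p <= 1 -> p * n%:R <= 2 -> th <= 2^-1 ->
  \sum_(x : {ffun 'I_K -> 'I_n.+1} | stopped n p th L K (ext x)) Pm p x <= expR (- L).
Proof.
move=> n0 hp hpn ht.
apply: le_trans (_ : \sum_(x : {ffun 'I_K -> 'I_n.+1}) Pm p x * Y n p th L (ext x) K * expR (- L) <= _).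
  apply: le_trans (_ : \sum_(x : {ffun 'I_K -> 'I_n.+1} | stopped n p th L K (ext x))
                          Pm p x * Y n p th L (ext x) K * expR (- L) <= _).
    apply: ler_sum => x hx.
    have [/eqP h0|hne] := boolP (Pm p x == 0).
      rewrite h0 !mul0r; exact: lexx.
    have [_ h2] := Y_inv p th L (valid_of_Pm n0 hne).
    have hY := h2 hx.
    rewrite -mulrA; apply: ler_peMr; first exact: Pm_ge0.
    rewrite -(expRxMexpNx_1 L); apply: ler_wpM2r; first exact: expR_ge0.
    exact: hY.
  rewrite [X in _ <= X](bigID (fun x => stopped n p th L K (ext x))) /= lerDl.
  apply: sumr_ge0 => x _; apply: mulr_ge0; last exact: expR_ge0.
  apply: mulr_ge0; [exact: Pm_ge0 | exact: Y_ge0].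
rewrite -mulr_suml; apply: ler_piMl; first exact: expR_ge0.
exact: EY_le1.
Qed.
Definition Dk (R : realType) (a : R) n f k : R :=
  SR R f k - k%:R * (a - k%:R / (2 * n%:R)).

Lemma SR0 (R : realType) f : SR R f 0 = 0.
Proof. by rewrite /SR /Sz big_ord0. Qed.

Lemma D_ident (R : realType) (a p : R) n f k : (0 < n)%N -> p * n%:R = 1 + a ->
  Dk a n f k = Mk n p f k - k%:R ^+ 2 * a / (2 * n%:R) - p * k%:R / 2
               - p * \sum_(l < k) SR R f l.
Proof.
move=> n0 hpn.
have nz : n%:R != 0 :> R by rewrite pnatr_eq0 -lt0n.
have hp : p = (1 + a) / n%:R by rewrite -hpn mulfK.
elim: k => [|k IH].
  by rewrite /Dk /Mk !big_ord0 SR0 !mul0r !mulr0 !subr0; ring.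
rewrite /Dk in IH *.
have eM : Mk n p f k = SR R f k - k%:R * (a - k%:R / (2 * n%:R)) + k%:R ^+ 2 * a / (2 * n%:R)
   + p * k%:R / 2 + p * \sum_(l < k) SR R f l by rewrite IH; ring.
rewrite SR_S Mk_S eM big_ord_recr /= Nr_E -addn1 natrD.
rewrite hp; field; exact: nz.
Qed.
Lemma normMle (R : realType) (c a e : R) : 0 <= c -> `|a| <= e -> `|c * a| <= c * e.
Proof. by move=> c0 ha; rewrite normrM ger0_norm // ler_wpM2l. Qed.

Lemma D_step (R : realType) (g e eta p : R) n K f k :
  (0 < n)%N -> p * n%:R = 1 + g * e -> 0 <= p -> -1 <= g <= 1 -> 0 < e ->
  e <= 100^-1 -> e <= eta / 400 -> 24 <= eta * n%:R * e -> K%:R <= 3 * n%:R * e ->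
  p * n%:R <= 2 -> (k <= K)%N ->
  `|Mk n p f k| < eta * n%:R * e ^+ 2 / 2 ->
  (forall l, (l < k)%N -> `|Dk (g * e) n f l| <= eta * n%:R * e ^+ 2) ->
  `|Dk (g * e) n f k| <= eta * n%:R * e ^+ 2.
Proof.
move=> n0 hpn p0 /andP[g1 g2] e0 e1 e2 e3 hK hp2 kK hM hD.
set nR := n%:R in hpn e3 hK hp2 hM hD *.
have nR0 : 0 < nR by rewrite /nR ltr0n.
set b := eta * nR * e ^+ 2 in hM hD *.
set T := 3 * nR * e in hK.
have eta0 : 0 < eta by lra.
have T0 : 0 <= T by rewrite /T; apply: mulr_ge0; [apply: mulr_ge0|]; lra.
have hle : forall l, (l <= K)%N -> l%:R <= T.
  by move=> l hl; apply: le_trans hK; rewrite ler_nat.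
have hkT := hle k kK.
have k0 : 0 <= k%:R :> R by [].
have ha : `|g * e| <= e.
  rewrite normrM (gtr0_norm e0) ler_piMl //; [lra| rewrite ler_norml; lra].
rewrite (D_ident f k n0 hpn).
have t1 : `|k%:R ^+ 2 * (g * e) / (2 * nR)| <= 9 / 2 * nR * e ^+ 3.
  rewrite mulrAC; apply: le_trans (normMle _ ha) _.
    by apply: divr_ge0; [apply: exprn_ge0|lra].
  apply: le_trans (_ : T ^+ 2 / (2 * nR) * e <= _).
    apply: ler_wpM2r; first lra.
    apply: ler_wpM2r; first by rewrite invr_ge0; lra.
    by apply: lerXn2r; rewrite ?nnegrE.
  rewrite /T le_eqVlt; apply/orP; left; apply/eqP; field; lra.
have t2 : `|p * k%:R / 2| <= 3 * e.
  rewrite ger0_norm; last by apply: divr_ge0; [apply: mulr_ge0|].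
  have : p * k%:R <= p * T by apply: ler_wpM2l.
  have -> : p * T = (p * nR) * (3 * e) by rewrite /T; ring.
  have : (p * nR) * (3 * e) <= 2 * (3 * e) by apply: ler_wpM2r; lra.
  lra.
set C := b + T * (e + T / (2 * nR)).
have hS : forall l, (l < k)%N -> `|SR R f l| <= C.
  move=> l hl.
  have hl' : (l <= K)%N by apply: leq_trans kK; apply: ltnW.
  have -> : SR R f l = Dk (g * e) n f l + l%:R * (g * e - l%:R / (2 * nR)) by rewrite /Dk; ring.
  apply: le_trans (ler_normD _ _) _; apply: lerD; first exact: hD.
  have hlT := hle l hl'.
  have hq : `|g * e - l%:R / (2 * nR)| <= e + T / (2 * nR).
    apply: le_trans (ler_normB _ _) _; apply: lerD => //.
    rewrite ger0_norm; last by apply: divr_ge0; [exact: ler0n | lra].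
    apply: ler_wpM2r; first by rewrite invr_ge0; lra.
    exact: hlT.
  rewrite normrM ger0_norm //; apply: ler_pM => //; exact: normr_ge0.
have C0 : 0 <= C.
  rewrite /C /b; apply: addr_ge0.
    by apply: mulr_ge0; [apply: mulr_ge0; lra|apply: exprn_ge0; lra].
  apply: mulr_ge0 => //; apply: addr_ge0; first lra.
  by apply: divr_ge0; lra.
have t3 : `|p * \sum_(l < k) SR R f l| <= 6 * e * b + 45 * nR * e ^+ 3.
  rewrite normrM ger0_norm //.
  apply: le_trans (_ : p * (k%:R * C) <= _).
    apply: ler_wpM2l => //; apply: le_trans (ler_norm_sum _ _ _) _.
    apply: le_trans (_ : \sum_(l < k) C <= _).
      by apply: ler_sum => l _; apply: hS.
    by rewrite sumr_const card_ord mulr_natl.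
  apply: le_trans (_ : p * (T * C) <= _).
    by apply: ler_wpM2l => //; apply: ler_wpM2r.
  have -> : p * (T * C) = (p * nR) * (3 * e * C) by rewrite /T; ring.
  apply: le_trans (_ : 2 * (3 * e * C) <= _).
    by apply: ler_wpM2r => //; apply: mulr_ge0 => //; lra.
  rewrite /C /T le_eqVlt; apply/orP; left; apply/eqP; field; lra.
have hfin : b / 2 + 9 / 2 * nR * e ^+ 3 + 3 * e + (6 * e * b + 45 * nR * e ^+ 3) <= b.
  have B0 : 0 < nR * e ^+ 2 by apply: mulr_gt0 => //; apply: exprn_gt0.
  set B := nR * e ^+ 2 in B0.
  have hb : b = eta * B by rewrite /b /B; ring.
  have h3 : nR * e ^+ 3 = B * e by rewrite /B; ring.

  have u1 : B * e <= B * (eta / 400) by apply: ler_wpM2l; lra.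
  have u2 : eta * B * e <= eta * B * 100^-1 by apply: ler_wpM2l => //; apply: mulr_ge0; lra.
  have u3 : 24 * e <= eta * B.
    have -> : eta * B = (eta * nR * e) * e by rewrite /B; ring.
    by apply: ler_wpM2r; lra.
  have : 6 * e * b = 6 * (eta * B * e) by rewrite hb; ring.
  lra.
have hD0 := ler_normB (Mk n p f k - k%:R ^+ 2 * (g * e) / (2 * nR) - p * k%:R / 2)
                       (p * \sum_(l < k) SR R f l).
have hD1 := ler_normB (Mk n p f k - k%:R ^+ 2 * (g * e) / (2 * nR)) (p * k%:R / 2).
have hD2 := ler_normB (Mk n p f k) (k%:R ^+ 2 * (g * e) / (2 * nR)).
lra.
Qed.
Lemma D_all (R : realType) (g e eta p : R) n K f :
  (0 < n)%N -> p * n%:R = 1 + g * e -> 0 <= p -> -1 <= g <= 1 -> 0 < e ->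
  e <= 100^-1 -> e <= eta / 400 -> 24 <= eta * n%:R * e -> K%:R <= 3 * n%:R * e ->
  p * n%:R <= 2 ->
  (forall l, (l <= K)%N -> `|Mk n p f l| < eta * n%:R * e ^+ 2 / 2) ->
  forall k, (k <= K)%N -> `|Dk (g * e) n f k| <= eta * n%:R * e ^+ 2.
Proof.
move=> n0 hpn p0 hg e0 e1 e2 e3 hK hp2 hM.
suff : forall k l, (l < k)%N -> (l <= K)%N -> `|Dk (g * e) n f l| <= eta * n%:R * e ^+ 2.
  by move=> H k hk; apply: (H k.+1).
elim=> [//|k IH] l; rewrite ltnS leq_eqVlt => /orP [/eqP ->|hl] hlK; last exact: IH.
apply: (@D_step R g e eta p n K f k) => //; first exact: hM.
by move=> l' hl'; apply: IH => //; apply: ltnW; apply: leq_trans hl' hlK.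
Qed.

Lemma dev_stop (R : realType) (g e eta t : R) n
  (x : {ffun 'I_(nsteps n e) -> 'I_n.+1}) :
  let K := nsteps n e in
  let p := (1 + g * e) / n%:R in
  let L := t * (eta * n%:R * e ^+ 2 / 2) - 4 * t ^+ 2 * K%:R in
  (0 < n)%N -> 0 <= p -> -1 <= g <= 1 -> 0 < e ->
  e <= 100^-1 -> e <= eta / 400 -> 24 <= eta * n%:R * e -> 
  p * n%:R <= 2 -> 0 <= t ->
  dev_event g e eta x -> stopped n p t L K (ext x) || stopped n p (- t) L K (ext x).
Proof.
move=> K p L n0 p0 hg e0 e1 e2 e3 hp2 t0.
have nR0 : 0 < n%:R :> R by rewrite ltr0n.
have hpn : p * n%:R = 1 + g * e by rewrite /p mulfVK // gt_eqF.
have hK : K%:R <= 3 * n%:R * e.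
  rewrite /K /nsteps truncn_le; apply: mulr_ge0; [apply: mulr_ge0|]; lra.
case/existsP => k hk.
have hk' : eta * n%:R * e ^+ 2 < `|Dk (g * e) n (ext x) k|.
  have B0 : 0 < n%:R * e ^+ 2 by apply: mulr_gt0 => //; apply: exprn_gt0.
  move: hk; rewrite (Spath_ext x (ltn_ord k : (k < K.+1)%N)) -/(SR R _ _).
  rewrite -/(Dk (g * e) n (ext x) k) => hk.
  by move: hk; rewrite (ltr_pdivlMl _ _ B0) mulrC mulrA.
have : ~~ [forall l : 'I_K.+1, `|Mk n p (ext x) l| < eta * n%:R * e ^+ 2 / 2].
  apply/negP => /forallP H.
  have := D_all n0 hpn p0 hg e0 e1 e2 e3 hK hp2 (fun l hl => H (Ordinal (hl : (l < K.+1)%N)))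
                (ltn_ord k : (k < K.+1)%N).
  by rewrite leNgt hk'.
rewrite negb_forall => /existsP [l]; rewrite -leNgt => hl.
have hlK : l%:R <= K%:R :> R by rewrite ler_nat -ltnS.
have ht2 : 4 * t ^+ 2 * l%:R <= 4 * t ^+ 2 * K%:R.
  by apply: ler_wpM2l => //; apply: mulr_ge0 => //; apply: exprn_ge0.
move: hl; rewrite ler_normr => /orP [hl|hl].
  apply/orP; left; apply/existsP; exists l; rewrite /Ak /L.
  have : t * (eta * n%:R * e ^+ 2 / 2) <= t * Mk n p (ext x) l by apply: ler_wpM2l.
  lra.
apply/orP; right; apply/existsP; exists l; rewrite /Ak /L sqrrN.
have : t * (eta * n%:R * e ^+ 2 / 2) <= t * - Mk n p (ext x) l by apply: ler_wpM2l.
rewrite mulrN mulNr; lra.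
Qed.
Lemma sum_or (R : realType) (T : finType) (A B : pred T) (F : T -> R) :
  (forall x, 0 <= F x) ->
  \sum_(x | A x || B x) F x <= \sum_(x | A x) F x + \sum_(x | B x) F x.
Proof.
move=> F0; rewrite big_mkcond [\sum_(x | A x) _]big_mkcond [\sum_(x | B x) _]big_mkcond.
rewrite -big_split /=; apply: ler_sum => x _.
by case: (A x); case: (B x) => /=; rewrite ?addr0 ?add0r ?lerDl ?F0.
Qed.

Lemma sum_sub (R : realType) (T : finType) (A B : pred T) (F : T -> R) :
  (forall x, 0 <= F x) -> (forall x, A x -> B x) ->
  \sum_(x | A x) F x <= \sum_(x | B x) F x.
Proof.
move=> F0 hAB; rewrite big_mkcond [\sum_(x | B x) _]big_mkcond; apply: ler_sum => x _.
by case hA : (A x); rewrite ?(hAB x hA) //; case: (B x).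
Qed.

Lemma main_fixed (R : realType) n (g e eta : R) :
  (2 <= n)%N -> -1 <= g <= 1 -> 0 < e -> e <= 100^-1 -> e <= eta / 400 ->
  eta * e <= 1 -> 24 <= eta * n%:R * e -> 384 <= eta ^+ 2 * n%:R * e ^+ 3 ->
  dev_prob n g e eta <= expR (- (eta ^+ 2 / 384 * n%:R * e ^+ 3)).
Proof.
move=> n2 hg e0 e1 e2 e3 e4 e5.
have n0 : (0 < n)%N by apply: leq_trans n2.
have nR2 : 2 <= n%:R :> R by rewrite ler_nat.
have nR0 : 0 < n%:R :> R by lra.
have eta0 : 0 < eta by lra.
set K := nsteps n e.
set p := (1 + g * e) / n%:R.
have hge : `|g * e| <= e.
  rewrite normrM (gtr0_norm e0) ler_piMl //; [lra| rewrite ler_norml; lra].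
have hge' : - e <= g * e <= e by rewrite -ler_norml.
have hpn : p * n%:R = 1 + g * e by rewrite /p mulfVK // gt_eqF.
have p0 : 0 <= p by rewrite /p; apply: divr_ge0; lra.
have p1 : p <= 1 by rewrite /p ler_pdivrMr //; lra.
have hp2 : p * n%:R <= 2 by rewrite hpn; lra.
have hp : 0 <= p <= 1 by rewrite p0 p1.
have hK : K%:R <= 3 * n%:R * e.
  rewrite /K /nsteps truncn_le; apply: mulr_ge0; [apply: mulr_ge0|]; lra.
set t := eta * e / 48.
have t0 : 0 <= t by rewrite /t; apply: divr_ge0 => //; apply: mulr_ge0; lra.
have t1 : t <= 2^-1 by rewrite /t; lra.
have t1' : - t <= 2^-1 by lra.
set L := t * (eta * n%:R * e ^+ 2 / 2) - 4 * t ^+ 2 * K%:R.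
have hL : eta ^+ 2 * n%:R * e ^+ 3 / 192 <= L.
  rewrite /L.
  have : 4 * t ^+ 2 * K%:R <= 4 * t ^+ 2 * (3 * n%:R * e).
    by apply: ler_wpM2l => //; apply: mulr_ge0 => //; apply: exprn_ge0.
  have -> : 4 * t ^+ 2 * (3 * n%:R * e) = eta ^+ 2 * n%:R * e ^+ 3 / 192 by rewrite /t; field.
  have -> : t * (eta * n%:R * e ^+ 2 / 2) = eta ^+ 2 * n%:R * e ^+ 3 / 96 by rewrite /t; field.
  lra.
rewrite /dev_prob -/K -/p.
under eq_bigr => x _ do rewrite path_probE.
apply: le_trans (_ : \sum_(x : {ffun 'I_K -> 'I_n.+1} |
    stopped n p t L K (ext x) || stopped n p (- t) L K (ext x)) Pm p x <= _).
  apply: sum_sub; first by move=> x; apply: Pm_ge0.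
  move=> x hx; apply: (dev_stop (eta := eta)) => //.
apply: le_trans (sum_or _ _ _) _; first by move=> x; apply: Pm_ge0.
apply: le_trans (_ : expR (- L) + expR (- L) <= _).
  by apply: lerD; apply: doob.
set X := eta ^+ 2 * n%:R * e ^+ 3.
have e5X : 384 <= X by [].
have Xpos : 0 <= X by lra.
have -> : eta ^+ 2 / 384 * n%:R * e ^+ 3 = X / 384 by rewrite /X; ring.
apply: le_trans (_ : expR (- (X / 192)) + expR (- (X / 192)) <= _).
  by apply: lerD; rewrite ler_expR lerN2.
have -> : - (X / 192) = - (X / 384) + - (X / 384) by field.
rewrite expRD.
have h2 : 2 <= expR (X / 384) by have := expR_ge1Dx (X / 384); lra.
have hinv : 2 * expR (- (X / 384)) <= 1.
  by have := ler_wpM2r (expR_ge0 (- (X / 384))) h2; rewrite expRxMexpNx_1.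
have E0 := expR_ge0 (- (X / 384)).
nra.
Qed.
Local Open Scope classical_set_scope.

Lemma eventually_lt (R : realType) (u : nat -> R) (d : R) :
  u n @[n --> \oo] --> 0 -> 0 < d -> exists N, forall n, (N <= n)%N -> u n < d.
Proof.
move=> h d0; have := cvgr_dist_lt _ _ h _ d0.
case => N _ hN; exists N => n hn; have := hN n hn; rewrite /= sub0r normrN.
by apply: le_lt_trans; apply: ler_norm.
Qed.

Lemma cube_powR (R : realType) (x : R) : 0 <= x -> (x `^ (3^-1 : R)) ^+ 3 = x.
Proof.
move=> x0; rewrite -powR_mulrn ?powR_ge0 // -powRrM mulVf ?powRr1 //.
Qed.


Theorem proposition3p2 (R : realType) (eps_lo eps_hi : nat -> R)
  (hle : forall n, eps_lo n <= eps_hi n)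
  (hlo : (n%:R `^ (3^-1 : R)) * eps_lo n @[n --> \oo] --> +oo)
  (hhi : eps_hi n @[n --> \oo] --> 0) :
  forall eta : R, 0 < eta ->
  exists kappa : R, 0 < kappa /\
  forall gamma : R, -1 <= gamma <= 1 ->
  forall eps : nat -> R, (forall n, eps_lo n <= eps n <= eps_hi n) ->
  exists N : nat, forall n : nat, (N <= n)%N ->
    dev_prob n gamma (eps n) eta <= expR (- (kappa * n%:R * eps n ^+ 3)).
Proof.
move=> eta eta0.
exists (eta ^+ 2 / 384); split.
  by apply: divr_gt0 => //; apply: exprn_gt0.
move=> gamma hg eps heps.
have d1 : 0 < 100^-1 :> R by rewrite invr_gt0 ltr0n.
have d2 : 0 < eta / 400 by lra.
have d3 : 0 < eta^-1 by rewrite invr_gt0.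
have [N1 h1] := eventually_lt hhi d1.
have [N2 h2] := eventually_lt hhi d2.
have [N3 h3] := eventually_lt hhi d3.
set C1 := 384 / eta ^+ 2 + 24 / eta + 2.
have e2 : 0 < eta ^+ 2 by apply: exprn_gt0.
have C1a : 0 <= 384 / eta ^+ 2 by apply: divr_ge0 => //; apply: ltW.
have C1b : 0 <= 24 / eta by apply: divr_ge0 => //; apply: ltW.
have C11 : 1 <= C1 by rewrite /C1; lra.
have := cvgry_ge hlo C1; case => N4 _ h4.
exists (N1 + N2 + N3 + N4 + 2)%N => n hn.
have n1 : (N1 <= n)%N by apply: leq_trans hn; rewrite -!addnA leq_addr.
have n2 : (N2 <= n)%N by apply: leq_trans hn; rewrite -!addnA addnCA leq_addr.
have n3 : (N3 <= n)%N by apply: leq_trans hn; rewrite addnC !addnA -addnA addnC -addnA leq_addr.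
have n4 : (N4 <= n)%N by apply: leq_trans hn; rewrite addnC addnA addnC -!addnA leq_addr.
have n22 : (2 <= n)%N by apply: leq_trans hn; rewrite leq_addl.
set e := eps n.
have [hlo' hhi'] : eps_lo n <= e /\ e <= eps_hi n by case/andP: (heps n).
have c4 : C1 <= n%:R `^ (3^-1 : R) * e.
  apply: le_trans (h4 n n4) _; apply: ler_wpM2l => //; exact: powR_ge0.
have e0 : 0 < e.
  rewrite ltNge; apply/negP => he.
  have : n%:R `^ (3^-1 : R) * e <= 0 by apply: mulr_ge0_le0 => //; exact: powR_ge0.
  lra.
have ea : e <= 100^-1 by apply: ltW; apply: le_lt_trans hhi' (h1 n n1).
have eb : e <= eta / 400 by apply: ltW; apply: le_lt_trans hhi' (h2 n n2).
have ec : eta * e <= 1.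
  have := le_lt_trans hhi' (h3 n n3) => he.
  have : eta * e <= eta * eta^-1 by apply: ler_wpM2l; [exact: ltW | exact: ltW].
  by rewrite mulfV ?gt_eqF.
have hC : C1 <= n%:R * e ^+ 3.
  have C10 : 0 <= C1 by lra.
  have : C1 ^+ 3 <= (n%:R `^ (3^-1 : R) * e) ^+ 3 by apply: lerXn2r; rewrite ?nnegrE //; lra.
  rewrite exprMn cube_powR //.
  have : C1 <= C1 ^+ 3.
    rewrite -[X in X <= _]mulr1 (_ : C1 ^+ 3 = C1 * C1 ^+ 2); last by rewrite exprS.
    apply: ler_wpM2l => //; rewrite -[1](expr1n _ 2); apply: lerXn2r; rewrite ?nnegrE //; lra.
  lra.
have nR0 : 0 <= n%:R :> R by [].
have h384 : 384 <= eta ^+ 2 * n%:R * e ^+ 3.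
  have : eta ^+ 2 * C1 <= eta ^+ 2 * (n%:R * e ^+ 3) by apply: ler_wpM2l => //; apply: ltW.
  have : eta ^+ 2 * C1 = 384 + eta ^+ 2 * (24 / eta + 2) by rewrite /C1; field; apply: lt0r_neq0.
  have : 0 <= eta ^+ 2 * (24 / eta + 2) by apply: mulr_ge0; lra.
  rewrite mulrA; lra.
have h24 : 24 <= eta * n%:R * e.
  have hee : n%:R * e ^+ 3 <= n%:R * e.
    rewrite exprS mulrA -[X in _ <= X]mulr1; apply: ler_wpM2l.
      by apply: mulr_ge0 => //; apply: ltW.
    by rewrite -[1](expr1n _ 2); apply: lerXn2r; rewrite ?nnegrE; lra.
  have : eta * C1 <= eta * (n%:R * e) by apply: ler_wpM2l; lra.
  have : eta * C1 = 24 + eta * (384 / eta ^+ 2 + 2) by rewrite /C1; field; apply: lt0r_neq0.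
  have : 0 <= eta * (384 / eta ^+ 2 + 2) by apply: mulr_ge0; lra.
  rewrite mulrA; lra.
exact: main_fixed.
Qed.
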